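(* Let $S$ be a finite set of odd primes and let $R_S$ be as in the context. For $\gamma\in\overline{\Gamma}_S$ one has $\gamma R_S\cap R_S\neq\emptyset$ if and only if $\gamma=\overline{x}$ for some $x\in\mathcal{O}$ with $\mathrm{Nm}(x)$ dividing $m_S$ (here $\overline{x}$ is the image of $x$ in $\overline{\Gamma}_S$).
   Context: Let $\mathcal{H}$ be the quaternion algebra over $\mathbb{Q}$ with basis $1, I, J, IJ$ and relations $I^2=J^2=-1$, $IJ=-JI$, with reduced norm $\mathrm{Nm}(a+bI+cJ+dIJ)=a^2+b^2+c^2+d^2$. Let $\mathcal{O}$ be the Hurwitz order, the $\mathbb{Z}$-span of $1, I, J, \tfrac12(1+I+J+IJ)$. For a finite set $S$ of primes, let $\mathbb{Z}_S=\mathbb{Z}[1/p : p\in S]$, $m_S=\prod_{p\in S}p$, $\mathcal{O}_S=\mathcal{O}\otimes_{\mathbb{Z}}\mathbb{Z}_S$, $\Gamma_S=\mathcal{O}_S^*$, and $\overline{\Gamma}_S=\Gamma_S/\mathbb{Z}_S^*$. For each odd prime $p$ fix an isomorphism $\mathcal{H}\otimes_{\mathbb{Q}}\mathbb{Q}_p\cong \mathrm{M}_2(\mathbb{Q}_p)$ carrying $\mathcal{O}\otimes_{\mathbb{Z}}\mathbb{Z}_p$ onto $\mathrm{M}_2(\mathbb{Z}_p)$; let $\mathfrak{X}_p$ be the Bruhat–Tits tree of $\mathrm{PGL}_2(\mathbb{Q}_p)$ (vertices are homothety classes of $\mathbb{Z}_p$-lattices in $\mathbb{Q}_p^2$, two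 classes adjacent when representatives $L'\subset L$ satisfy $L/L'\cong \mathbb{Z}/p$), viewed as a metric tree with edges of length $1$, on which $\overline{\Gamma}_S$ acts through $\mathcal{H}^*\subset \mathrm{GL}_2(\mathbb{Q}_p)$, and let $v_{0,p}$ be the class of $\mathbb{Z}_p\oplus\mathbb{Z}_p$. $\mathfrak{X}_S=\prod_{p\in S}\mathfrak{X}_p$ with the diagonal action. $R_p$ is the set of points of $\mathfrak{X}_p$ at distance $<2/3$ from $v_{0,p}$ and $R_S=\prod_{p\in S}R_p$. *)

(* Defs.v *)
From HB Require Import structures.
From mathcomp Require Import all_boot all_order all_algebra.
Set Implicit Arguments. Unset Strict Implicit. Unset Printing Implicit Defensive.
Import Order.TTheory GRing.Theory Num.Theory.
Local Open Scope ring_scope.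

(* Quat a b c d  represents  a + b I + c J + d IJ. *)
Record quat := Quat { qa : rat; qb : rat; qc : rat; qd : rat }.

Definition q1 : quat := Quat 1 0 0 0.
Definition q0 : quat := Quat 0 0 0 0.

(* Multiplication with I^2 = J^2 = -1, IJ = -JI (so (IJ)^2 = -1, J(IJ) = I, (IJ)I = J). *)
Definition qmul (x y : quat) : quat := Quat
  (qa x * qa y - qb x * qb y - qc x * qc y - qd x * qd y)
  (qa x * qb y + qb x * qa y + qc x * qd y - qd x * qc y)
  (qa x * qc y - qb x * qd y + qc x * qa y + qd x * qb y)
  (qa x * qd y + qb x * qc y - qc x * qb y + qd x * qa y).

Definition qscale (c : rat) (x : quat) : quat :=
  Quat (c * qa x) (c * qb x) (c * qc x) (c * qd x).

Definition qconj (x : quat) : quat := Quat (qa x) (- qb x) (- qc x) (- qd x).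

Definition Nm (x : quat) : rat := qa x ^+ 2 + qb x ^+ 2 + qc x ^+ 2 + qd x ^+ 2.

Definition qinv (x : quat) : quat := qscale (Nm x)^-1 (qconj x).

(* ---------- Hurwitz order: Z-span of 1, I, J, (1+I+J+IJ)/2 ---------- *)
Definition inO (x : quat) : Prop :=
  exists a b c d : int,
    x = Quat (a%:~R + d%:~R / 2) (b%:~R + d%:~R / 2) (c%:~R + d%:~R / 2) (d%:~R / 2).

Definition mS (S : seq nat) : nat := (\prod_(p <- S) p)%N.

Definition isInt (q : rat) : bool := denq q == 1.

Definition inZS (S : seq nat) (q : rat) : Prop :=
  exists k : nat, isInt (((mS S) ^ k)%:R * q).

Definition unitZS (S : seq nat) (u : rat) : Prop :=
  u != 0 /\ inZS S u /\ inZS S u^-1.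

Definition inOS (S : seq nat) (x : quat) : Prop :=
  exists k : nat, inO (qscale (((mS S) ^ k)%:R) x).

Definition inGammaS (S : seq nat) (x : quat) : Prop :=
  x <> q0 /\ inOS S x /\ inOS S (qinv x).

Definition inOloc (p : nat) (x : quat) : Prop :=
  exists n : nat, (0 < n)%N /\ coprime n p /\ inO (qscale n%:R x).

Definition punit (p : nat) (q : rat) : bool :=
  [&& q != 0, ~~ (p%:Z %| numq q)%Z & ~~ (p%:Z %| denq q)%Z].

(* Vertices of X_p are represented by g in H^*: g stands for the homothety class of
   the right O_(p)-lattice g O_(p) (this corresponds, via H (x) Q_p = M_2(Q_p),
   O (x) Z_p = M_2(Z_p), to the lattice class [g Z_p^2]).  The base vertex v_{0,p}
   is represented by 1. *)
Definition sameV (p : nat) (g h : quat) : Prop :=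
  exists c : rat, c != 0 /\
    (let y := qscale c (qmul (qinv g) h) in inOloc p y /\ punit p (Nm y)).

(* adjacency: after rescaling, h O_(p) is a sublattice of g O_(p) with simple
   quotient, i.e. c g^-1 h in O_(p) with reduced norm of p-adic valuation 1. *)
Definition adjV (p : nat) (g h : quat) : Prop :=
  exists c : rat, c != 0 /\
    (let y := qscale c (qmul (qinv g) h) in inOloc p y /\ punit p (Nm y / p%:R)).

Fixpoint walk (p : nat) (n : nat) (g h : quat) : Prop :=
  match n with
  | 0 => sameV p g h
  | n'.+1 => exists k : quat, adjV p g k /\ walk p n' k h
  end.

Definition distV (p : nat) (g : quat) (n : nat) : Prop :=
  walk p n q1 g /\ forall k : nat, (k < n)%N -> ~ walk p k q1 g.

(* Points of the metric tree: a point on the edge [src, tgt] at distance par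
   from src (0 <= par <= 1).  Every point of X_p has such a description. *)
Record tpoint (R : realFieldType) := TPoint { pt_src : quat; pt_tgt : quat; pt_par : R }.

Definition onTree (R : realFieldType) (p : nat) (P : tpoint R) : Prop :=
  adjV p (pt_src P) (pt_tgt P) /\ 0 <= pt_par P <= 1.

(* P in R_p : metric distance from v_{0,p} is < 2/3.  In a tree, the distance from
   v_0 to the point at parameter t on the edge [g,h] is min(d(g)+t, d(h)+1-t). *)
Definition inRp (R : realFieldType) (p : nat) (P : tpoint R) : Prop :=
  exists n m : nat, distV p (pt_src P) n /\ distV p (pt_tgt P) m /\
    (n%:R + pt_par P < 2%:R / 3%:R \/ m%:R + 1 - pt_par P < 2%:R / 3%:R).

Definition act (R : realFieldType) (g : quat) (P : tpoint R) : tpoint R :=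
  TPoint (qmul g (pt_src P)) (qmul g (pt_tgt P)) (pt_par P).

(* Main.v *)
Require Import Defs.
From HB Require Import structures.
From mathcomp Require Import all_boot all_order all_algebra.
From mathcomp Require Import ring lra zify.
Import Order.TTheory GRing.Theory Num.Theory.
Local Open Scope ring_scope.
Set Implicit Arguments. Unset Strict Implicit.

Ltac qdes := repeat match goal with | x : quat |- _ => destruct x end;
  rewrite /qmul /qscale /qconj /qinv /Nm /q1 /q0 /=.

Lemma qmulA x y z : qmul x (qmul y z) = qmul (qmul x y) z.
Proof. qdes; f_equal; ring. Qed.
Lemma qmul1q x : qmul q1 x = x.
Proof. qdes; f_equal; ring. Qed.
Lemma qmulq1 x : qmul x q1 = x.
Proof. qdes; f_equal; ring. Qed.
Lemma qinv1 : qinv q1 = q1.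
Proof. rewrite /qinv /qscale /qconj /Nm /q1 /=; f_equal; field. Qed.
Lemma qscale1 x : qscale 1 x = x.
Proof. qdes; f_equal; ring. Qed.
Lemma qscaleM c d x : qscale c (qscale d x) = qscale (c * d) x.
Proof. qdes; f_equal; ring. Qed.
Lemma qmulZl c x y : qmul (qscale c x) y = qscale c (qmul x y).
Proof. qdes; f_equal; ring. Qed.
Lemma qmulZr c x y : qmul x (qscale c y) = qscale c (qmul x y).
Proof. qdes; f_equal; ring. Qed.
Lemma NmM x y : Nm (qmul x y) = Nm x * Nm y.
Proof. qdes; ring. Qed.
Lemma NmZ c x : Nm (qscale c x) = c ^+ 2 * Nm x.
Proof. qdes; ring. Qed.
Lemma Nm_conj x : Nm (qconj x) = Nm x.
Proof. qdes; ring. Qed.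
Lemma Nm_ge0 x : 0 <= Nm x.
Proof. qdes; by rewrite !addr_ge0 // sqr_ge0. Qed.
Lemma Nm_eq0 x : Nm x = 0 -> x = q0.
Proof.
case: x => a b c d; rewrite /Nm /q0 /= => H. move: H; rewrite -!addrA.
move/eqP; rewrite paddr_eq0 ?addr_ge0 ?sqr_ge0 // => /andP[]; rewrite sqrf_eq0 => /eqP->.
rewrite paddr_eq0 ?addr_ge0 ?sqr_ge0 // => /andP[]; rewrite sqrf_eq0 => /eqP->.
rewrite paddr_eq0 ?addr_ge0 ?sqr_ge0 // => /andP[]; rewrite sqrf_eq0 => /eqP->.
rewrite sqrf_eq0 => /eqP->. by [].
Qed.
Lemma Nm_inv x : Nm (qinv x) = (Nm x)^-1.
Proof.
rewrite /qinv NmZ Nm_conj. have [->|h] := eqVneq (Nm x) 0; first by rewrite invr0 mulr0.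
by rewrite exprVn expr2 invfM -mulrA mulVf // mulr1.
Qed.
Lemma qinvK x : Nm x != 0 -> qmul (qinv x) x = q1.
Proof. qdes => H; f_equal; field; exact: H. Qed.
Lemma qmulV x : Nm x != 0 -> qmul x (qinv x) = q1.
Proof. qdes => H; f_equal; field; exact: H. Qed.
Lemma qmul_conj x : qmul x (qconj x) = qscale (Nm x) q1.
Proof. qdes; f_equal; ring. Qed.
Lemma qinvZ c x : c != 0 -> qinv (qscale c x) = qscale c^-1 (qinv x).
Proof.
move=> hc; rewrite /qinv NmZ qscaleM.
have [h0|h] := eqVneq (Nm x) 0.
  by rewrite h0 mulr0 !invr0 mulr0; qdes; f_equal; ring.
move: h; qdes => h; f_equal; field; rewrite ?hc ?h //.
Qed.
Lemma qinvM x y : Nm x != 0 -> Nm y != 0 -> qinv (qmul x y) = qmul (qinv y) (qinv x).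
Proof.
move=> hx hy. have hxy : Nm (qmul x y) != 0 by rewrite NmM mulf_neq0.
have e : qmul (qmul (qinv y) (qinv x)) (qmul x y) = q1.
  by rewrite -qmulA (qmulA (qinv x)) qinvK // qmul1q qinvK.
by rewrite -[LHS]qmul1q -e -qmulA qmulV // qmulq1.
Qed.
Lemma qcancel_r x a b : Nm a != 0 -> qmul x a = b -> x = qmul b (qinv a).
Proof. by move=> ha <-; rewrite -qmulA qmulV // qmulq1. Qed.
Lemma qsolve c a b y : c != 0 -> Nm a != 0 -> qscale c (qmul (qinv a) b) = y ->
  b = qscale c^-1 (qmul a y).
Proof.
move=> hc ha <-; rewrite qmulZr qscaleM mulVf // qscale1 qmulA qmulV // qmul1q //.
Qed.

Definition H4 (a b c d : int) : quat :=
  Quat (a%:~R + d%:~R / 2) (b%:~R + d%:~R / 2) (c%:~R + d%:~R / 2) (d%:~R / 2).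

Lemma inO_mul x y : inO x -> inO y -> inO (qmul x y).
Proof.
move=> [a [b [c [d ->]]]] [e [f [g [h ->]]]].
exists (- d*h - d*g - c*g + c*f - b*h - b*g - b*f + a*e).
exists (- d*g + d*f + c*h + c*f - b*g + b*e + a*f).
exists (d*f + c*h + c*f + c*e - b*h - b*g + a*g).
exists (d*h + d*g - d*f + d*e - c*h - c*f - c*f + b*h + b*g + b*g + a*h).
rewrite /qmul /=; f_equal; by field.
Qed.

Lemma inO_conj x : inO x -> inO (qconj x).
Proof.
move=> [a [b [c [d ->]]]]; exists (a + d), (- b), (- c), (- d).
rewrite /qconj /=; f_equal; by field.
Qed.

Lemma inO_scale (z : int) x : inO x -> inO (qscale z%:~R x).
Proof.
move=> [a [b [c [d ->]]]]; exists (z * a), (z * b), (z * c), (z * d).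
rewrite /qscale /=; f_equal; by field.
Qed.

Lemma inO_scalen (n : nat) x : inO x -> inO (qscale n%:R x).
Proof. exact: (inO_scale (Posz n)). Qed.

Lemma inO_q1 : inO q1.
Proof. exists 1, 0, 0, 0; rewrite /q1; f_equal; by field. Qed.

Lemma inO_Nm x : inO x -> exists n : nat, Nm x = n%:R.
Proof.
move=> hx; have h0 := Nm_ge0 x; move: hx h0 => [a [b [c [d ->]]]].
have -> : Nm (H4 a b c d) = (a*a + b*b + c*c + a*d + b*d + c*d + d*d)%:~R.
  rewrite /Nm /=; by field.
set z := (_ + _)%R; rewrite ler0z => hz.
exists `|z|%N. by rewrite -[z in LHS]gez0_abs.
Qed.

Definition cA x := qa x - qd x.
Definition cB x := qb x - qd x.
Definition cC x := qc x - qd x.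
Definition cD x := 2 * qd x.

Lemma inOP x : inO x <->
  [/\ cA x \is a Num.int, cB x \is a Num.int, cC x \is a Num.int & cD x \is a Num.int].
Proof.
split.
  move=> [a [b [c [d ->]]]]; rewrite /cA /cB /cC /cD /=.
  have -> : a%:~R + d%:~R / 2 - d%:~R / 2 = a%:~R :> rat by field.
  have -> : b%:~R + d%:~R / 2 - d%:~R / 2 = b%:~R :> rat by field.
  have -> : c%:~R + d%:~R / 2 - d%:~R / 2 = c%:~R :> rat by field.
  have -> : 2 * (d%:~R / 2) = d%:~R :> rat by field.
  by rewrite !intr_int.
case=> /intrP[a ea] /intrP[b eb] /intrP[c ec] /intrP[d ed].
exists a, b, c, d; move: ea eb ec ed; rewrite /cA /cB /cC /cD.
case: x => xa xb xc xd /= <- <- <- <-; f_equal; by field.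
Qed.

Lemma cAZ c x : cA (qscale c x) = c * cA x. Proof. rewrite /cA /=; ring. Qed.
Lemma cBZ c x : cB (qscale c x) = c * cB x. Proof. rewrite /cB /=; ring. Qed.
Lemma cCZ c x : cC (qscale c x) = c * cC x. Proof. rewrite /cC /=; ring. Qed.
Lemma cDZ c x : cD (qscale c x) = c * cD x. Proof. rewrite /cD /=; ring. Qed.

Lemma divp_int (p n : nat) (w : rat) : prime p -> coprime n p ->
  w \is a Num.int -> (n%:R * ((p%:R)^-1 * w)) \is a Num.int -> ((p%:R)^-1 * w) \is a Num.int.
Proof.
move=> pp cnp /intrP[z ->] /intrP[k ek].
have p0 : (p%:R : rat) != 0 by rewrite pnatr_eq0 -lt0n prime_gt0.
have e : ((n%:Z * z)%:~R : rat) = ((p%:Z * k)%:~R).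
  rewrite intrM intrM -ek /=; field; exact: p0.
move/intr_inj: e => e.
have hd : (p%:Z %| n%:Z * z)%Z by rewrite e dvdz_mulr.
rewrite Gauss_dvdzr in hd; last by rewrite coprimezE /= coprime_sym.
rewrite mulrC; exact: (Qint_dvdz hd).
Qed.

Lemma inO_div (p : nat) x : prime p -> inO x -> inOloc p (qscale (p%:R)^-1 x) ->
  inO (qscale (p%:R)^-1 x).
Proof.
move=> pp /inOP[hA hB hC hD] [n [n0 [cnp /inOP[]]]].
rewrite !cAZ !cBZ !cCZ !cDZ => h1 h2 h3 h4; apply/inOP.
by rewrite !cAZ !cBZ !cCZ !cDZ; split; apply: (divp_int pp cnp).
Qed.

Section Val.
Variable p : nat.
Hypothesis pp : prime p.

Definition vq (q : rat) : int := (logn p `|numq q|)%:Z - (logn p `|denq q|)%:Z.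

Lemma vq_frac (n d : int) : n != 0 -> d != 0 ->
  vq (n%:~R / d%:~R) = (logn p `|n|)%:Z - (logn p `|d|)%:Z.
Proof.
move=> n0 d0; set x : rat := _ / _.
have x0 : x != 0 by rewrite mulf_neq0 ?invr_eq0 ?intr_eq0.
have e : numq x * d = n * denq x.
  apply: (@intr_inj rat); rewrite !intrM numqE /x; field; by rewrite intr_eq0.
have e2 : (`|numq x| * `|d| = `|n| * `|denq x|)%N by rewrite -!abszM e.
have hn : (0 < `|numq x|)%N by rewrite absz_gt0 numq_eq0.
have hd : (0 < `|denq x|)%N by rewrite absz_gt0 gt_eqF ?denq_gt0.
have hn' : (0 < `|n|)%N by rewrite absz_gt0.
have hd' : (0 < `|d|)%N by rewrite absz_gt0.
have := congr1 (logn p) e2; rewrite !lognM // /vq => e3.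
lia.
Qed.

Lemma vq0 : vq 0 = 0. Proof. by rewrite /vq /= logn0 logn1. Qed.

Lemma ratE (q : rat) : q = (numq q)%:~R / (denq q)%:~R.
Proof. by rewrite divq_num_den. Qed.

Lemma vqM q r : q != 0 -> r != 0 -> vq (q * r) = vq q + vq r.
Proof.
move=> q0 r0.
have -> : q * r = (numq q * numq r)%:~R / (denq q * denq r)%:~R.
  by rewrite [q in LHS]ratE [r in LHS]ratE !intrM; field; rewrite !intr_eq0 !gt_eqF ?denq_gt0.
have nq : numq q != 0 by rewrite numq_eq0.
have nr : numq r != 0 by rewrite numq_eq0.
have dq : denq q != 0 by rewrite gt_eqF ?denq_gt0.
have dr : denq r != 0 by rewrite gt_eqF ?denq_gt0.
rewrite vq_frac ?mulf_neq0 // !abszM !lognM ?absz_gt0 // /vq; lia.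
Qed.

Lemma vqV q : vq q^-1 = - vq q.
Proof.
have [->|q0] := eqVneq q 0; first by rewrite invr0 vq0.
have -> : q^-1 = (denq q)%:~R / (numq q)%:~R.
  by rewrite [q in LHS]ratE invf_div.
rewrite vq_frac; first by rewrite /vq; lia. by rewrite gt_eqF ?denq_gt0. by rewrite numq_eq0.
Qed.

Lemma vq_int (z : int) : z != 0 -> vq z%:~R = logn p `|z|.
Proof.
move=> z0; have -> : (z%:~R : rat) = z%:~R / (1%:Z)%:~R by rewrite divr1.
by rewrite vq_frac // logn1 subr0.
Qed.

Lemma vq_nat (n : nat) : (0 < n)%N -> vq n%:R = logn p n.
Proof. by move=> n0; have := vq_int (z := n%:Z); rewrite -lt0n; apply. Qed.

Lemma ndvd_logn (m : nat) : ~~ (p %| m)%N -> logn p m = 0%N.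
Proof. by move=> h; apply: logn_coprime; rewrite prime_coprime. Qed.

Lemma dvd_logn (m : nat) : (0 < m)%N -> (p %| m)%N -> (0 < logn p m)%N.
Proof. by move=> m0 h; rewrite logn_gt0 mem_primes pp m0 h. Qed.

Lemma punitP q : punit p q <-> (q != 0 /\ vq q = 0).
Proof.
rewrite /punit !dvdzE /=; split.
  case/and3P=> q0 h1 h2; split=> //; by rewrite /vq !ndvd_logn.
case=> q0 hv; rewrite q0 /=.
have hn : (0 < `|numq q|)%N by rewrite absz_gt0 numq_eq0.
have hd : (0 < `|denq q|)%N by rewrite absz_gt0 gt_eqF ?denq_gt0.
have cnd := coprime_num_den q.
case: (boolP (p %| `|numq q|)%N) => h1; case: (boolP (p %| `|denq q|)%N) => h2 //=.
- have : (p %| gcdn `|numq q| `|denq q|)%N by rewrite dvdn_gcd h1.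
  by rewrite (eqP cnd) dvdn1 => /eqP p1; move: pp; rewrite p1.
- move: hv; rewrite /vq (ndvd_logn h2); have := dvd_logn hn h1; lia.
- move: hv; rewrite /vq (ndvd_logn h1); have := dvd_logn hd h2; lia.
Qed.

Lemma vq_ge0_den q : q != 0 -> 0 <= vq q -> ~~ (p %| `|denq q|)%N.
Proof.
move=> q0 hv; apply/negP => h2.
have hn : (0 < `|numq q|)%N by rewrite absz_gt0 numq_eq0.
have hd : (0 < `|denq q|)%N by rewrite absz_gt0 gt_eqF ?denq_gt0.
have cnd := coprime_num_den q.
case: (boolP (p %| `|numq q|)%N) => h1.
- have : (p %| gcdn `|numq q| `|denq q|)%N by rewrite dvdn_gcd h1.
  by rewrite (eqP cnd) dvdn1 => /eqP p1; move: pp; rewrite p1.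
- move: hv; rewrite /vq (ndvd_logn h1); have := dvd_logn hd h2; lia.
Qed.

Lemma punitM q r : punit p q -> punit p r -> punit p (q * r).
Proof.
move=> /punitP[q0 hq] /punitP[r0 hr]; apply/punitP; split; first by rewrite mulf_neq0.
by rewrite vqM // hq hr.
Qed.

Lemma punitV q : punit p q -> punit p q^-1.
Proof.
move=> /punitP[q0 hq]; apply/punitP; split; first by rewrite invr_eq0.
by rewrite vqV hq.
Qed.

Lemma punit_neq0 q : punit p q -> q != 0.
Proof. by case/punitP. Qed.

Lemma inOloc_O x : inO x -> inOloc p x.
Proof. move=> h; exists 1%N; split => //; split; first by rewrite coprime1n. by rewrite qscale1. Qed.

Lemma inOloc_mul x y : inOloc p x -> inOloc p y -> inOloc p (qmul x y).
Proof.
move=> [n [n0 [cn hx]]] [m [m0 [cm hy]]]; exists (n * m)%N; split; [|split].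
- by rewrite muln_gt0 n0.
- by rewrite coprimeMl cn.
- have -> : qscale (n * m)%:R (qmul x y) = qmul (qscale n%:R x) (qscale m%:R y).
    by rewrite qmulZl qmulZr qscaleM natrM.
  exact: inO_mul.
Qed.

Lemma inOloc_conj x : inOloc p x -> inOloc p (qconj x).
Proof.
move=> [n [n0 [cn hx]]]; exists n; split => //; split => //.
have -> : qscale n%:R (qconj x) = qconj (qscale n%:R x) by case: x {hx} => *; rewrite /qscale /qconj /=; f_equal; ring.
exact: inO_conj.
Qed.

Lemma inOloc_scale c x : ~~ (p %| `|denq c|)%N -> inOloc p x -> inOloc p (qscale c x).
Proof.
move=> hc [n [n0 [cn hx]]]; exists (`|denq c| * n)%N; split; [|split].
- by rewrite muln_gt0 n0 absz_gt0 gt_eqF ?denq_gt0.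
- by rewrite coprimeMl cn coprime_sym prime_coprime // hc.
- have -> : qscale (`|denq c| * n)%:R (qscale c x) = qscale (numq c)%:~R (qscale n%:R x).
    rewrite !qscaleM; congr qscale.
    rewrite natrM -[(`|denq c|%N)%:R]/((`|denq c|%N)%:~R : rat) gez0_abs ?ltW ?denq_gt0 //.
    rewrite numqE; ring.
  exact: inO_scale.
Qed.

Lemma inOloc_inv u : inOloc p u -> punit p (Nm u) -> inOloc p (qinv u).
Proof.
move=> hu hN; rewrite /qinv; apply: inOloc_scale; last exact: inOloc_conj.
move/punitV: hN => /punitP[h0 h1]; apply: vq_ge0_den => //; by rewrite h1.
Qed.

End Val.

Definition good p y := inOloc p y /\ (punit p (Nm y) \/ punit p (Nm y / p%:R)).

Lemma Nm1 : Nm q1 = 1. Proof. by rewrite /Nm /q1 /=; ring. Qed.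

Lemma sameV1 p w : sameV p q1 w ->
  exists c u, [/\ c != 0, inOloc p u, punit p (Nm u) & w = qscale c u].
Proof.
case=> c [c0 /= [h1 h2]].
exists c^-1, (qscale c (qmul (qinv q1) w)); split => //; first by rewrite invr_eq0.
by rewrite qscaleM mulVf // qscale1 qinv1 qmul1q.
Qed.

Lemma adjV_dec p s t : adjV p s t ->
  exists c e, [/\ c != 0, inOloc p e, punit p (Nm e / p%:R), Nm s != 0 & t = qscale c (qmul s e)].
Proof.
case=> c [c0 /= [h1 h2]].
have hs : Nm s != 0.
  apply/negP => /eqP hs; move: h2; rewrite NmZ NmM Nm_inv hs invr0 !(mulr0, mul0r).
  by rewrite /punit eqxx.
exists c^-1, (qscale c (qmul (qinv s) t)); split => //; first by rewrite invr_eq0.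
exact: qsolve.
Qed.

Lemma solve_g g z k2 a k b : qmul g z = qscale k2 a -> z = qscale k b -> k != 0 -> Nm b != 0 ->
  g = qscale (k2 / k) (qmul a (qinv b)).
Proof.
move=> e1 e2 k0 b0.
have z0 : Nm z != 0 by rewrite e2 NmZ mulf_neq0 // expf_neq0.
rewrite (qcancel_r z0 e1) e2 qinvZ // qmulZl qmulZr qscaleM //.
Qed.

Lemma good_of p g k a b : prime p -> inOloc p a -> inOloc p b -> punit p (Nm b) ->
  (punit p (Nm a) \/ punit p (Nm a / p%:R)) -> k != 0 ->
  g = qscale k (qmul a (qinv b)) -> exists l, l != 0 /\ good p (qscale l g).
Proof.
move=> pp ha hb hNb hNa k0 ->; exists k^-1; split; first by rewrite invr_eq0.
rewrite qscaleM mulVf // qscale1; split.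
  by apply: inOloc_mul => //; apply: inOloc_inv.
rewrite NmM Nm_inv; case: hNa => h; [left|right].
  by apply: punitM => //; apply: punitV.
by rewrite mulrAC; apply: punitM => //; apply: punitV.
Qed.

Lemma nat_small (R : realFieldType) (n : nat) (t : R) : 0 <= t -> n%:R + t < 2%:R / 3%:R -> n = 0%N.
Proof.
move=> t0 h; case: n h => // n; rewrite -natr1 => h; exfalso.
have : (n%:R : R) >= 0 by rewrite ler0n.
have : 2%:R / 3%:R < (1 : R) by rewrite ltr_pdivrMr ?ltr0n // mul1r ltr_nat.
lra.
Qed.

Lemma inRp_cases (R : realFieldType) p (P : tpoint R) : 0 <= pt_par P <= 1 -> inRp p P ->
  sameV p q1 (pt_src P) \/ sameV p q1 (pt_tgt P).
Proof.
case/andP=> t0 t1 [n [m [[hn _] [[hm _] h]]]]; case: h => h.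
  by left; move: hn; rewrite (nat_small t0 h).
right; move: hm; have t0' : 0 <= 1 - pt_par P by rewrite subr_ge0.
by rewrite (@nat_small R m (1 - pt_par P) t0') //; rewrite addrA.
Qed.

Lemma punit_ne0 p q : punit p q -> q != 0.
Proof. by case/and3P. Qed.

Lemma local_step (R : realFieldType) p g (P : tpoint R) : prime p -> onTree p P ->
  inRp p P -> inRp p (act g P) -> exists l, l != 0 /\ good p (qscale l g).
Proof.
move=> pp [hadj hpar] hP hgP.
have hpar' : 0 <= pt_par (act g P) <= 1 by [].
case: (adjV_dec hadj) => c3 [e [c30 he1 he2 hs ht]].
have e0 : Nm e != 0.
  apply/negP => /eqP h; move: he2; rewrite h mul0r; by rewrite /punit eqxx.
case: (inRp_cases hpar hP) => /sameV1 [k1 [u1 [k10 hu1 hNu1 hw]]];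
case: (inRp_cases hpar' hgP) => /sameV1 [k2 [u2 [k20 hu2 hNu2 /= hg]]].
-
  have hu10 : Nm u1 != 0 by apply: punit_ne0 hNu1.
  have := solve_g hg hw k10 hu10 => hgE.
  apply: (good_of pp hu2 hu1 hNu1 (or_introl hNu2) _ hgE); by rewrite mulf_neq0 ?invr_eq0.
-
  have hu10 : Nm u1 != 0 by apply: punit_ne0 hNu1.
  have hz1 : qmul g (qmul (pt_tgt P) (qconj e)) = qscale k2 (qmul u2 (qconj e)).
    by rewrite qmulA hg qmulZl.
  have hz2 : qmul (pt_tgt P) (qconj e) = qscale (c3 * Nm e * k1) u1.
    rewrite ht qmulZl -qmulA qmul_conj qmulZr qmulq1 hw !qscaleM.
    congr qscale; ring.
  have k0 : c3 * Nm e * k1 != 0 by rewrite !mulf_neq0.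
  have := solve_g hz1 hz2 k0 hu10 => hgE.
  apply: (good_of pp _ hu1 hNu1 _ _ hgE).
  + by apply: inOloc_mul => //; apply: inOloc_conj.
  + by right; rewrite NmM Nm_conj -mulrA; apply: punitM.
  + by rewrite mulf_neq0 ?invr_eq0.
-
  have hu10 : Nm u1 != 0 by apply: punit_ne0 hNu1.
  have hz1 : qmul g (qmul (pt_src P) e) = qscale k2 (qmul u2 e).
    by rewrite qmulA hg qmulZl.
  have hz2 : qmul (pt_src P) e = qscale (c3^-1 * k1) u1.
    by rewrite -qscaleM -hw ht qscaleM mulVf // qscale1.
  have k0 : c3^-1 * k1 != 0 by rewrite !mulf_neq0 ?invr_eq0.
  have := solve_g hz1 hz2 k0 hu10 => hgE.
  apply: (good_of pp _ hu1 hNu1 _ _ hgE).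
  + by apply: inOloc_mul.
  + by right; rewrite NmM -mulrA; apply: punitM.
  + by rewrite mulf_neq0 ?invr_eq0.
-
  have hu10 : Nm u1 != 0 by apply: punit_ne0 hNu1.
  have := solve_g hg hw k10 hu10 => hgE.
  apply: (good_of pp hu2 hu1 hNu1 (or_introl hNu2) _ hgE); by rewrite mulf_neq0 ?invr_eq0.
Qed.

Lemma mS_cons a S : mS (a :: S) = (a * mS S)%N.
Proof. by rewrite /mS big_cons. Qed.

Lemma mS_gt0 S : all prime S -> (0 < mS S)%N.
Proof.
elim: S => [|a S IH] /=; first by rewrite /mS big_nil.
by case/andP=> pa hS; rewrite mS_cons muln_gt0 prime_gt0 // IH.
Qed.

Lemma logn_mS q S : prime q -> all prime S -> logn q (mS S) = count_mem q S.
Proof.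
move=> pq; elim: S => [|a S IH] /=; first by rewrite /mS big_nil logn1.
case/andP=> pa hS; rewrite mS_cons lognM; [|exact: prime_gt0|exact: mS_gt0].
rewrite (logn_prime _ pa) IH //.
by rewrite eq_sym.
Qed.

Lemma dvd_mS p S : p \in S -> (p %| mS S)%N.
Proof.
elim: S => [|a S IH] //=; rewrite inE mS_cons => /orP[/eqP->|h].
  exact: dvdn_mulr.
by rewrite dvdn_mull // IH.
Qed.

Lemma logn_nonprime q n : ~~ prime q -> logn q n = 0%N.
Proof.
move=> h; apply/eqP; rewrite -leqn0 leqNgt logn_gt0 mem_primes.
by rewrite (negbTE h).
Qed.

Lemma dvd_m S N j : uniq S -> all prime S -> (0 < N)%N -> (N %| (mS S) ^ j)%N ->
  (forall p, p \in S -> ~~ (p ^ 2 %| N)%N) -> (N %| mS S)%N.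
Proof.
move=> uS pS N0 hN hsq.
have m0 := mS_gt0 pS.
suff e : gcdn N (mS S) = N by rewrite -e dvdn_gcdr.
apply: eqn_from_log; rewrite ?gcdn_gt0 ?N0 // => q.
rewrite logn_gcd //.
case: (boolP (prime q)) => pq; last by rewrite !logn_nonprime.
suff : (logn q N <= logn q (mS S))%N by move=> h; rewrite (minn_idPl h).
rewrite logn_mS // count_uniq_mem //.
case: (boolP (q \in S)) => qS /=.
  have := hsq q qS; rewrite pfactor_dvdn //; lia.
have mj : (0 < mS S ^ j)%N by rewrite expn_gt0 m0.
have := dvdn_leq_log q mj hN.
by rewrite lognX logn_mS // count_uniq_mem // (negbTE qS) muln0.
Qed.

Lemma isIntP q : isInt q = (q \is a Num.int).
Proof. by rewrite Qint_def. Qed.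

Lemma unitZS_mulp S l p : all prime S -> p \in S -> unitZS S l -> unitZS S (l * p%:R).
Proof.
move=> pS pin [l0 [[k hk] [k' hk']]].
have pp : prime p by move/allP: pS => /(_ p pin).
have p0 : (p%:R : rat) != 0 by rewrite pnatr_eq0 -lt0n prime_gt0.
split; first by rewrite mulf_neq0.
split.
  exists k; move: hk; rewrite !isIntP mulrA => h.
  by rewrite rpredM // natr_int.
exists k'.+1; move: hk'; rewrite !isIntP => h.
have hd := dvd_mS pin.
have -> : ((mS S ^ k'.+1)%:R * (l * p%:R)^-1 : rat) = (mS S %/ p)%:R * ((mS S ^ k')%:R * l^-1).
  rewrite natr_div ?unitfE // expnS natrM invfM; field; by rewrite p0 l0.
by rewrite rpredM // natr_int.
Qed.

Section Step.
Variables (p : nat) (x y : quat) (mu : rat) (N : nat).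
Hypotheses (pp : prime p) (hx : inO x) (hy : inOloc p y) (hxy : x = qscale mu y)
  (mu0 : mu != 0) (hNy : punit p (Nm y) \/ punit p (Nm y / p%:R))
  (hN : Nm x = N%:R) (N0 : (0 < N)%N) (hp2 : (p ^ 2 %| N)%N).

Lemma step_div : inO (qscale (p%:R)^-1 x).
Proof.
have p0 : (p%:R : rat) != 0 by rewrite pnatr_eq0 -lt0n prime_gt0.
have vp : vq p p%:R = 1 by rewrite vq_nat ?prime_gt0 // logn_prime // eqxx.
have vpi : vq p (p%:R)^-1 = -1 by rewrite (vqV pp); congr (- _); exact: vp.
have y0 : Nm y != 0.
  by case: hNy => /(punit_ne0) //; apply: contraNneq => ->; rewrite mul0r.
have vy : 0 <= vq p (Nm y) <= 1.
  case: hNy => /(punitP pp) [h1 h2]; first by rewrite h2.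
  move: h2; rewrite vqM // ?invr_eq0 // vpi => h; apply/andP; split; lia.
have vN : 2 <= vq p (Nm x).
  rewrite hN vq_nat //; have := hp2; rewrite pfactor_dvdn //; lia.
have e : vq p (Nm x) = vq p mu + vq p mu + vq p (Nm y).
  by rewrite hxy NmZ expr2 !vqM // mulf_neq0.
have hmu : 0 <= vq p (mu / p%:R) by rewrite vqM ?invr_eq0 // vpi; lia.
apply: inO_div => //.
rewrite hxy qscaleM mulrC; apply: inOloc_scale => //.
apply: vq_ge0_den => //; by rewrite mulf_neq0 ?invr_eq0.
Qed.

End Step.

Lemma descent S g : uniq S -> all prime S ->
  (forall p, p \in S -> exists l, l != 0 /\ good p (qscale l g)) ->
  forall N x lam j, inO x -> Nm x = N%:R -> (0 < N)%N -> (N %| mS S ^ j)%N ->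
  unitZS S lam -> g = qscale lam x ->
  exists x' : quat, inO x' /\
      (exists n : nat, Nm x' = n%:R /\ (n %| mS S)%N) /\
      (exists u : rat, unitZS S u /\ g = qscale u x').
Proof.
move=> uS pS hloc; elim/ltn_ind => N IH x lam j hx hN N0 hNj hlam hg.
case: (boolP (has (fun p => p ^ 2 %| N)%N S)); last first.
  move/hasPn => hn; exists x; split => //; split; last by exists lam.
  by exists N; split => //; apply: (dvd_m uS pS N0 hNj).
case/hasP => p pin hp2.
have pp : prime p by move/allP: pS => /(_ p pin).
have p0 : (p%:R : rat) != 0 by rewrite pnatr_eq0 -lt0n prime_gt0.
case: (hloc p pin) => l [l0 [hy hNy]].
have lam0 : lam != 0 by case: hlam.
have hxy : x = qscale (l * lam)^-1 (qscale l g).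
  by rewrite hg !qscaleM -mulrA mulVf ?mulf_neq0 // qscale1.
have hx' := step_div pp hx hy hxy (invr_neq0 (mulf_neq0 l0 lam0)) hNy hN N0 hp2.
have p2 : (0 < p ^ 2)%N by rewrite expn_gt0 prime_gt0.
apply: (IH (N %/ p ^ 2)%N _ _ (lam * p%:R) j hx').
- by rewrite ltn_Pdiv // (ltn_exp2l 0) ?prime_gt1.
- rewrite NmZ hN natr_div ?unitfE ?natrX ?expf_neq0 //; by rewrite exprVn mulrC.
- by rewrite divn_gt0 // dvdn_leq.
- exact: dvdn_trans (dvdn_div hp2) hNj.
- exact: unitZS_mulp.
- by rewrite qscaleM -mulrA mulfV // mulr1.
Qed.

Lemma forward (R : realFieldType) S g : uniq S -> all (fun p => prime p && odd p) S -> inGammaS S g ->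
  (exists P : nat -> tpoint R, forall p : nat, p \in S ->
       [/\ onTree p (P p), inRp p (P p) & inRp p (act g (P p))]) ->
  exists x : quat, inO x /\
      (exists n : nat, Nm x = n%:R /\ (n %| mS S)%N) /\
      (exists u : rat, unitZS S u /\ g = qscale u x).
Proof.
move=> uS hS [g0 [[k hk] [l hl]]] [P hP].
have pS : all prime S by apply: sub_all hS => p /andP[].
have hloc : forall p, p \in S -> exists l, l != 0 /\ good p (qscale l g).
  move=> p pin; have pp : prime p by move/allP: pS => /(_ p pin).
  by case: (hP p pin) => h1 h2 h3; apply: local_step h1 h2 h3.
have m0 := mS_gt0 pS.
set m := mS S in m0 hk hl *.
have mk0 : ((m ^ k)%:R : rat) != 0 by rewrite pnatr_eq0 -lt0n expn_gt0 m0.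
have ml0 : ((m ^ l)%:R : rat) != 0 by rewrite pnatr_eq0 -lt0n expn_gt0 m0.
have gN : Nm g != 0 by apply/negP => /eqP /Nm_eq0.
case: (inO_Nm hk) => N0 hN0; case: (inO_Nm hl) => M hM.
have e : ((N0 * M)%:R : rat) = (m ^ (2 * (k + l)))%:R.
  rewrite natrM -hN0 -hM NmZ NmZ Nm_inv.
  rewrite !natrX mulnDr exprD !exprM -!(exprAC _ 2); field; by rewrite gN.
have e' : (N0 * M = m ^ (2 * (k + l)))%N by apply/eqP; rewrite -(eqr_nat rat) e.
have N0p : (0 < N0)%N.
  rewrite lt0n -(eqr_nat rat) -hN0 NmZ mulf_neq0 //; by rewrite expf_neq0.
apply: (descent uS pS hloc hk hN0 N0p (j := (2 * (k + l))%N) (lam := ((m ^ k)%:R)^-1)).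
- by rewrite -e' dvdn_mulr.
- split; first by rewrite invr_eq0.
  split; first by exists k; rewrite isIntP mulfV // rpred1.
  by exists 0%N; rewrite isIntP invrK expn0 mul1r natr_int.
- by rewrite qscaleM mulVf // qscale1.
Qed.

Section TwoSq.
Variables (p : nat) (h : nat).
Hypotheses (pp : prime p) (hp : p = (h + h).+1).

Lemma ltp_of (a : 'I_h.+1) : (a < p)%N.
Proof. have := ltn_ord a; lia. Qed.

Lemma sq_inj : injective (fun a : 'I_h.+1 => ((val a)%:R ^+ 2 : 'F_p)).
Proof.
move=> a a' /= /eqP; rewrite eqf_sqr => /orP[/eqP e|/eqP e]; apply: val_inj => /=.
  have := congr1 val e; rewrite /= !val_Fp_nat // !modn_small //; exact: ltp_of.
have e2 : ((val a + val a')%:R : 'F_p) = 0 by rewrite natrD e addNr.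
have := congr1 val e2; rewrite /= val_Fp_nat // modn_small.
  by move=> /eqP; rewrite addn_eq0 => /andP[/eqP-> /eqP->].
have := ltn_ord a; have := ltn_ord a'; lia.
Qed.

Lemma sq_inj2 : injective (fun b : 'I_h.+1 => (-1 - (val b)%:R ^+ 2 : 'F_p)).
Proof. by move=> a a' /= /addrI /oppr_inj /sq_inj. Qed.

Lemma two_sq_gen : exists a b : nat, [/\ (a <= h)%N, (b <= h)%N & (p %| a ^ 2 + b ^ 2 + 1)%N].
Proof.
set A := [set ((val a)%:R ^+ 2 : 'F_p) | a : 'I_h.+1].
set B := [set (-1 - (val b)%:R ^+ 2 : 'F_p) | b : 'I_h.+1].
have cA : #|A| = h.+1 by rewrite card_imset ?card_ord //; exact: sq_inj.
have cB : #|B| = h.+1 by rewrite card_imset ?card_ord //; exact: sq_inj2.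
have : A :&: B != set0.
  apply/negP => /eqP e; have := cardsU A B; rewrite e cards0 cA cB subn0 => e2.
  have := max_card (mem (A :|: B)); rewrite card_Fp // e2 => h2.
  move: hp h2; lia.
case/set0Pn => r /setIP[/imsetP[a _ ->] /imsetP[b _ e]].
exists a, b; split; try by rewrite -ltnS.
rewrite (dvdn_pcharf (pchar_Fp pp)) !natrD !natrX.
by apply/eqP; rewrite e; ring.
Qed.
End TwoSq.

Lemma two_sq p : prime p -> odd p ->
  exists a b : nat, [/\ (a <= p./2)%N, (b <= p./2)%N & (p %| a ^ 2 + b ^ 2 + 1)%N].
Proof.
move=> pp op; apply: two_sq_gen => //.
have := odd_double_half p; rewrite op -addnn; lia.
Qed.

Lemma punit1 p : prime p -> punit p 1.
Proof. move=> pp; apply/(punitP pp); split => //; by rewrite /vq /= !logn1. Qed.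

Lemma sameV1_intro p c y : c != 0 -> inOloc p y -> punit p (Nm y) -> sameV p q1 (qscale c y).
Proof.
move=> c0 hy hN; exists c^-1; split; first by rewrite invr_eq0.
by rewrite /= qinv1 qmul1q qscaleM mulVf // qscale1.
Qed.

Lemma adjV1_intro p c y : c != 0 -> inOloc p y -> punit p (Nm y / p%:R) -> adjV p q1 (qscale c y).
Proof.
move=> c0 hy hN; exists c^-1; split; first by rewrite invr_eq0.
by rewrite /= qinv1 qmul1q qscaleM mulVf // qscale1.
Qed.

Lemma sameV_self p w : prime p -> Nm w != 0 -> sameV p w w.
Proof.
move=> pp w0; exists 1; split => //=; rewrite qscale1 qinvK // Nm1; split; last exact: punit1.
exact: inOloc_O inO_q1.
Qed.

Lemma vq_pinv p : prime p -> vq p (p%:R)^-1 = -1.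
Proof.
move=> pp; have vp : vq p p%:R = 1 by rewrite vq_nat ?prime_gt0 // logn_prime // eqxx.
by rewrite (vqV pp); congr (- _); exact: vp.
Qed.

Lemma parity_contra p (a b : rat) : prime p -> a != 0 -> punit p b -> ~ punit p (a ^+ 2 * b / p%:R).
Proof.
move=> pp a0 hb; have b0 := punit_ne0 hb; move/(punitP pp): hb => [_ hb].
have p0 : (p%:R : rat) != 0 by rewrite pnatr_eq0 -lt0n prime_gt0.
move/(punitP pp) => [_]; rewrite vqM // ?mulf_neq0 ?expf_neq0 ?invr_eq0 //.
rewrite vqM ?expf_neq0 // hb vq_pinv // expr2 vqM //; lia.
Qed.

Lemma not_sameV p w : prime p -> adjV p q1 w -> ~ sameV p q1 w.
Proof.
move=> pp [c' [c0' /= [_ h]]] /sameV1 [c [u [c0 _ hu ew]]].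
move: h; rewrite qinv1 qmul1q ew qscaleM NmZ.
by apply: parity_contra => //; rewrite mulf_neq0.
Qed.

Lemma distV0 p w : sameV p q1 w -> distV p w 0.
Proof. by move=> h; split. Qed.

Lemma distV1 p w : prime p -> adjV p q1 w -> Nm w != 0 -> distV p w 1.
Proof.
move=> pp h w0; split; first by exists w; split => //; exact: sameV_self.
by case=> // _ /=; exact: not_sameV.
Qed.

Lemma punit_div p n : prime p -> (0 < n)%N -> logn p n = 1%N -> punit p (n%:R / p%:R).
Proof.
move=> pp n0 hl; have p0 : (p%:R : rat) != 0 by rewrite pnatr_eq0 -lt0n prime_gt0.
have nz : (n%:R : rat) != 0 by rewrite pnatr_eq0 -lt0n.
apply/(punitP pp); split; first by rewrite mulf_neq0 ?invr_eq0.
by rewrite vqM ?invr_eq0 // vq_pinv // vq_nat // hl.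
Qed.

Lemma punit_nat p n : prime p -> (0 < n)%N -> ~~ (p %| n)%N -> punit p n%:R.
Proof.
move=> pp n0 hn; apply/(punitP pp); split; first by rewrite pnatr_eq0 -lt0n.
by rewrite vq_nat // ndvd_logn.
Qed.

Lemma Nm_ne0_scale c y : c != 0 -> Nm y != 0 -> Nm (qscale c y) != 0.
Proof. by move=> c0 y0; rewrite NmZ mulf_neq0 // expf_neq0. Qed.

Lemma local_back (R : realFieldType) p S x u n g : prime p -> odd p -> p \in S -> uniq S ->
  all prime S -> inO x -> Nm x = n%:R -> (n %| mS S)%N -> u != 0 -> g = qscale u x ->
  exists Q : tpoint R, [/\ onTree p Q, inRp p Q & inRp p (act g Q)].
Proof.
move=> pp op pin uS pS hx hN hn u0 hg.
have m0 := mS_gt0 pS.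
have n0 : (0 < n)%N.
  rewrite lt0n; apply/negP => /eqP e; move: hn; rewrite e dvd0n => /eqP e2.
  by rewrite e2 in m0.
have hlog : (logn p n <= 1)%N.
  have := dvdn_leq_log p m0 hn; by rewrite logn_mS // count_uniq_mem // pin.
have nz : (n%:R : rat) != 0 by rewrite pnatr_eq0 -lt0n.
have x0 : Nm x != 0 by rewrite hN.
have hxO := inOloc_O p hx.
have q1l : inOloc p q1 by exact: inOloc_O inO_q1.
have hq1 : sameV p q1 q1 by rewrite -[X in sameV _ _ X]qscale1; apply: sameV1_intro; rewrite ?Nm1 ?punit1.
case: (boolP (p %| n)%N) => hpn.
- have hl : logn p n = 1%N by have := dvd_logn pp n0 hpn; lia.
  have hpu := punit_div pp n0 hl.
  have hadj : adjV p q1 (qconj x).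
    rewrite -[X in adjV _ _ X]qscale1; apply: adjV1_intro => //; first exact: inOloc_O (inO_conj hx).
    by rewrite Nm_conj hN.
  exists (TPoint q1 (qconj x) 2^-1); split.
  + split => //=; apply/andP; split; lra.
  + exists 0%N, 1%N; split; [exact: distV0|split; [ apply: distV1 => //; by rewrite Nm_conj |left => /=; lra]].
  + have e : qmul g (qconj x) = qscale (u * n%:R) q1.
      by rewrite hg qmulZl qmul_conj hN qscaleM.
    rewrite /act /= qmulq1 e; exists 1%N, 0%N; split; [|split].
    * apply: distV1 => //; last by rewrite hg Nm_ne0_scale.
      by rewrite hg; apply: adjV1_intro => //; rewrite hN.
    * by apply: distV0; apply: sameV1_intro; rewrite ?mulf_neq0 ?Nm1 ?punit1.
    * right => /=; rewrite ?mulr0n ?mulr1n; lra.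
- have hpu := punit_nat pp n0 hpn.
  case: (two_sq pp op) => a [b [ha hb hk]].
  set k := (a ^ 2 + b ^ 2 + 1)%N in hk.
  have k0 : (0 < k)%N by rewrite /k addn1.
  have hkl : logn p k = 1%N.
    have := odd_double_half p; rewrite op -addnn => hp.
    have kp : (k < p * p)%N by rewrite /k; nia.
    case/dvdnP: hk => k' ek.
    have k'0 : (0 < k')%N by move: k0; rewrite ek muln_gt0 => /andP[].
    have kpp : (k' < p)%N by move: kp; rewrite ek ltn_mul2r => /andP[].
    have nk' : ~~ (p %| k')%N by apply/negP => hd; have := dvdn_leq k'0 hd; lia.
    rewrite ek lognM //; last exact: prime_gt0.
    by rewrite (ndvd_logn pp nk') (logn_prime _ pp) eqxx.
  have hkp := punit_div pp k0 hkl.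
  set z := Quat a%:R b%:R 1 0.
  have hz : inO z.
    exists a, b, 1, 0; rewrite /z /H4; f_equal; by field.
  have hNz : Nm z = k%:R by rewrite /z /Nm /k /= !natrD !natrX; ring.
  have z0 : Nm z != 0 by rewrite hNz pnatr_eq0 -lt0n.
  have hadj : adjV p q1 z.
    rewrite -[X in adjV _ _ X]qscale1; apply: adjV1_intro => //; first exact: inOloc_O.
    by rewrite hNz.
  exists (TPoint q1 z 0); split.
  + split => //=; apply/andP; split; lra.
  + exists 0%N, 1%N; split; [exact: distV0|split; [ exact: distV1 |left => /=; lra]].
  + rewrite /act /= qmulq1; exists 0%N, 1%N; split; [|split].
    * by apply: distV0; rewrite hg; apply: sameV1_intro; rewrite ?hN.
    * have e : qmul g z = qscale u (qmul x z) by rewrite hg qmulZl.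
      rewrite e; apply: distV1 => //; last by rewrite Nm_ne0_scale // NmM mulf_neq0.
      apply: adjV1_intro => //; first by apply: inOloc_mul => //; exact: inOloc_O.
      by rewrite NmM hN hNz -mulrA; apply: punitM.
    * left => /=; rewrite ?mulr0n ?mulr1n; lra.
Qed.

Lemma exP (R : realFieldType) (S : seq nat) (F : nat -> tpoint R -> Prop) :
  (forall p, p \in S -> exists Q, F p Q) -> exists P : nat -> tpoint R, forall p, p \in S -> F p (P p).
Proof.
elim: S => [|a S IH] h; first by exists (fun _ => @TPoint R q1 q1 0).
case: (h a (mem_head _ _)) => Qa hQa.
case: IH => [p pin|P hP]; first by apply: h; rewrite inE pin orbT.
exists (fun q => if q == a then Qa else P q) => p; rewrite inE.
by case: eqP => [->|_] //= pin; apply: hP.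
Qed.

Theorem mainTheorem6 (R : realFieldType) (S : seq nat) (g : quat) :
  uniq S -> all (fun p => prime p && odd p) S -> inGammaS S g ->
  ((exists P : nat -> tpoint R, forall p : nat, p \in S ->
       [/\ onTree p (P p), inRp p (P p) & inRp p (act g (P p))])
   <->
   (exists x : quat, inO x /\
      (exists n : nat, Nm x = n%:R /\ (n %| mS S)%N) /\
      (exists u : rat, unitZS S u /\ g = qscale u x))).
Proof.
move=> uS hS hG; split; first exact: forward.
case=> x [hx [[n [hN hn]] [u [hu hg]]]].
have pS : all prime S by apply: sub_all hS => p /andP[].
apply: (@exP R S (fun p Q => [/\ onTree p Q, inRp p Q & inRp p (act g Q)])) => p pin.
have /andP[pp op] : prime p && odd p by move/allP: hS => /(_ p pin).
by apply: (@local_back R p S x u n g pp op pin uS pS hx hN hn _ hg); case: hu.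
Qed.
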